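(* For every integer $v\ge 2$, the $(v,2,1)$-BIBD on a $v$-set $X$ (whose blocks are all $2$-subsets of $X$) has a weak nesting $\phi:\mathcal{A}\to Y$ with $X\subseteq Y$ and $|Y|=w=\left\lceil \frac{5v-1}{4}\right\rceil$, and this is optimal, i.e. no weak nesting of this BIBD has $|Y|<\left\lceil \frac{5v-1}{4}\right\rceil$.
   Context: A $(v,k,\lambda)$-BIBD is a pair $(X,\mathcal{A})$ where $X$ is a set of $v$ points and $\mathcal{A}$ is a multiset of $k$-subsets of $X$ (blocks) such that every pair of distinct points lies in exactly $\lambda$ blocks. A partial $(w,k,\lambda)$-BIBD is defined in the same way on $w$ points, except that every pair lies in at most $\lambda$ blocks. Given a $(v,k,\lambda)$-BIBD $(X,\mathcal{A})$ and a set $Y\supseteq X$ with $|Y|=w$, a map $\phi:\mathcal{A}\to Y$ is a weak nesting if $\phi(A)\notin A$ for every block $A$ and the multiset $\{A\cup\{\phi(A)\}:A\in\mathcal{A}\}$ is a partial $(w,k+1,\lambda+1)$-BIBD on $Y$. A weak nesting is optimal if $w=|Y|$ is as small as possible. *)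

(* Defs.v *)
From mathcomp Require Import all_boot.
Set Implicit Arguments. Unset Strict Implicit. Unset Printing Implicit Defensive.

(* The superset Y of X with |Y| = n is modelled as 'I_n,
   where X is identified with the ordinals of 'I_n with value < v
   (so we require v <= n). *)

Definition is_block (v : nat) (A : {set 'I_v}) : bool := #|A| == 2.

Definition ext_block (v n : nat) (phi : {set 'I_v} -> 'I_n) (A : {set 'I_v})
  : {set 'I_n} :=
  [set y : 'I_n | [exists x in A, val x == val y] || (y == phi A)].

(* phi (restricted to the blocks) is a weak nesting of the complete
   (v,2,1)-BIBD into Y = 'I_n (with X ⊆ Y):
   - phi A ∉ A for every block A,
   - the extended blocks form a partial (n,3,2)-BIBD on Y: every pair of
     distinct points of Y lies in at most 2 extended blocks. *)
Definition weak_nesting (v n : nat) (phi : {set 'I_v} -> 'I_n) : Prop :=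
  v <= n /\
  (forall A : {set 'I_v}, is_block A -> forall x, x \in A -> val (phi A) != val x) /\
  (forall p q : 'I_n, p != q ->
     #|[set A : {set 'I_v} | is_block A && (p \in ext_block phi A)
                                        && (q \in ext_block phi A)]| <= 2).

Definition wopt (v : nat) : nat := (5 * v - 1 + 3) %/ 4.

(* Main.v *)
Require Import Defs.
From mathcomp Require Import all_boot.
From mathcomp Require Import zify.
Set Implicit Arguments. Unset Strict Implicit. Unset Printing Implicit Defensive.

Section N.
Variable v : nat.
Definition ev := ~~ odd v.
Definition uu := if odd v then v else v.-1.
Definition MM := uu./2.
Definition ss := MM.+1./2.
Definition addu x e := if x + e < uu then x + e else x + e - uu.
Definition dd x y := if x <= y then y - x else y + uu - x.
Definition inw d := odd (d + MM) && ~~ (ev && ~~ odd MM && (d == 1)).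
Definition kk d := if ev && ~~ odd MM then d./2 else d.-1./2.
Definition ee d := (MM + 1 + d)./2.
Definition HH x d := if inw d then addu x (ee d) else v + kk d.
Definition FF a b :=
  if ev && (a == uu) then addu b ss
  else if ev && (b == uu) then addu a ss
  else if dd a b <= MM then HH a (dd a b) else HH b (dd b a).

Ltac sif := repeat match goal with |- context [if ?b then _ else _] =>
  lazymatch b with context [if _ then _ else _] => fail | _ => case: (boolP b) => ? end end.

Hypothesis hv : 3 <= v.

Lemma uuE : uu = MM.*2.+1 /\ (ev -> v = uu.+1) /\ (~~ ev -> v = uu).
Proof. have := hv; rewrite /MM /uu /ev; case: (boolP (odd v)) => h /=; lia. Qed.

Lemma M1 : 1 <= MM.
Proof. have := hv; rewrite /MM /uu; case: (boolP (odd v)) => h /=; lia. Qed.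

Lemma addu_lt x e : x < uu -> e < uu -> addu x e < uu.
Proof. rewrite /addu; sif; move=> *; lia. Qed.
Lemma dd_addu x e : x < uu -> e < uu -> dd x (addu x e) = e.
Proof. rewrite /addu /dd; sif; move=> *; lia. Qed.
Lemma addu_dd x y : x < uu -> y < uu -> addu x (dd x y) = y.
Proof. rewrite /addu /dd; sif; move=> *; lia. Qed.
Lemma dd_sum x y : x < uu -> y < uu -> x != y -> dd x y + dd y x = uu.
Proof. rewrite /dd; sif; move=> *; lia. Qed.
Lemma dd_lt x y : x < uu -> y < uu -> dd x y < uu.
Proof. rewrite /dd; sif; move=> *; lia. Qed.
Lemma dd0 x y : x < uu -> y < uu -> (dd x y == 0) = (x == y).
Proof. rewrite /dd; sif; move=> *; lia. Qed.
Lemma addu_inj y1 y2 d : y1 < uu -> y2 < uu -> d < uu -> addu y1 d = addu y2 d -> y1 = y2.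
Proof. rewrite /addu; sif; move=> *; lia. Qed.
Lemma dd_addu2 y d e : y < uu -> d <= e -> e < uu -> dd (addu y d) (addu y e) = e - d.
Proof. rewrite /addu /dd; sif; move=> *; lia. Qed.

Definition wopt' := (5 * v - 1 + 3) %/ 4.

Lemma ss_facts : 0 < ss /\ ss <= MM /\ ss.*2 <= MM + 1 /\ MM <= ss.*2.
Proof. have := M1; rewrite /ss; lia. Qed.

Lemma ee_facts d : inw d -> 0 < d -> d <= MM -> d < MM /\ (ee d).*2 = MM + 1 + d.
Proof. rewrite /inw /ee => /andP [h1 _]; lia. Qed.

Lemma pt_lt x : x < v -> x != uu -> x < uu.
Proof. have := uuE; rewrite /ev; case: (boolP (odd v)) => h; lia. Qed.

Lemma uu_le : uu <= v.
Proof. have := uuE; rewrite /ev; case: (boolP (odd v)) => h; lia. Qed.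

Lemma noev_lt x : x < v -> ~~ ev -> x < uu.
Proof. have := uuE; lia. Qed.

Lemma MM_lt : MM < uu.
Proof. have := uuE; lia. Qed.

Lemma Lin x y : x < v -> y < v -> x != y -> FF x y < v ->
  FF x y < uu /\
  ((ev /\ x = uu /\ y < uu /\ FF x y = addu y ss) \/
   (x < uu /\ ((ev /\ y = uu /\ dd x (FF x y) = ss) \/
     (exists d, [/\ 0 < d <= MM, inw d, y = addu x d & dd x (FF x y) = ee d]) \/
     (exists d, [/\ 0 < d <= MM, inw d, y < uu, x = addu y d & dd x (FF x y) = ee d - d])))).
Proof.
move=> xv yv xy.
have [U1 [U2 U3]] := uuE. have M1' := M1. have [s1 [s2 [s3 s4]]] := ss_facts.
have MU := MM_lt.
rewrite /FF.
case: (boolP (ev && (x == uu))) => [/andP [e /eqP ex]|h1].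
  move=> _; have yu : y < uu by apply: pt_lt => //; rewrite -ex eq_sym.
  split; first by apply: addu_lt; lia.
  by left.
case: (boolP (ev && (y == uu))) => [/andP [e /eqP ey]|h2].
  move=> _; have xu : x < uu by apply: pt_lt => //; rewrite -ey.
  split; first by apply: addu_lt; lia.
  right; split => //; left; split => //; split => //; apply: dd_addu; lia.
have xu : x < uu.
  case: (boolP ev) => e; last by apply: noev_lt.
  by apply: pt_lt => //; move: h1; rewrite e.
have yu : y < uu.
  case: (boolP ev) => e; last by apply: noev_lt.
  by apply: pt_lt => //; move: h2; rewrite e.
have ds := dd_sum xu yu xy.
have d0 : 0 < dd x y by move: (dd0 xu yu); rewrite (negbTE xy); lia.
have d0' : 0 < dd y x by have := dd_lt xu yu; lia.
case: ifP => hd; rewrite /HH.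
  case: ifP => hi; last by lia.
  have [f1 f2] := ee_facts hi d0 hd.
  move=> _; split; first by apply: addu_lt; lia.
  right; split => //; right; left; exists (dd x y); split; [lia | done | by rewrite addu_dd | ].
  by rewrite dd_addu //; lia.
have hd' : dd y x <= MM by lia.
case: ifP => hi; last by lia.
have [f1 f2] := ee_facts hi d0' hd'.
move=> _; split; first by apply: addu_lt; lia.
right; split => //; right; right; exists (dd y x); split; [lia | done | done | by rewrite addu_dd | ].
rewrite -{1}(addu_dd yu xu) dd_addu2 //; lia.
Qed.

Lemma Lout x y : x < v -> y < v -> x != y -> v <= FF x y ->
  [/\ x < uu, y < uu & exists d, [/\ 0 < d <= MM, ~~ inw d, FF x y = v + kk d &
      (y = addu x d \/ x = addu y d)]].
Proof.
move=> xv yv xy.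
have [U1 [U2 U3]] := uuE. have M1' := M1. have [s1 [s2 [s3 s4]]] := ss_facts.
have MU := MM_lt. have UV := uu_le.
rewrite /FF.
case: (boolP (ev && (x == uu))) => [/andP [e /eqP ex]|h1].
  have : addu y ss < uu by apply: addu_lt; lia.
  lia.
case: (boolP (ev && (y == uu))) => [/andP [e /eqP ey]|h2].
  have : addu x ss < uu by apply: addu_lt; lia.
  lia.
have xu : x < uu.
  case: (boolP ev) => e; last by apply: noev_lt.
  by apply: pt_lt => //; move: h1; rewrite e.
have yu : y < uu.
  case: (boolP ev) => e; last by apply: noev_lt.
  by apply: pt_lt => //; move: h2; rewrite e.
have ds := dd_sum xu yu xy.
have d0 : 0 < dd x y by move: (dd0 xu yu); rewrite (negbTE xy); lia.
have d0' : 0 < dd y x by have := dd_lt xu yu; lia.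
case: ifP => hd; rewrite /HH.
  case: ifP => hi.
    have : addu x (ee (dd x y)) < uu by apply: addu_lt; have := ee_facts hi d0 hd; lia.
    lia.
  move=> _; split => //; exists (dd x y); split; [lia | by rewrite hi | done | by left; rewrite addu_dd].
have hd' : dd y x <= MM by lia.
case: ifP => hi.
  have : addu y (ee (dd y x)) < uu by apply: addu_lt; have := ee_facts hi d0' hd'; lia.
  lia.
move=> _; split => //; exists (dd y x); split; [lia | by rewrite hi | done | by right; rewrite addu_dd].
Qed.

Lemma pt_lt' x : x < v -> ~~ (ev && (x == uu)) -> x < uu.
Proof. move=> xv; case: (boolP ev) => e /=; [exact: pt_lt | move=> _; exact: noev_lt]. Qed.

Lemma FF_sym a b : a < v -> b < v -> a != b -> FF a b = FF b a.
Proof.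
move=> av bv ab; have [U1 [U2 U3]] := uuE.
rewrite /FF.
case: (boolP (ev && (a == uu))) => [/andP [e /eqP ea]|h1].
  by rewrite e /= (_ : (b == uu) = false) //; apply/negbTE; rewrite -ea eq_sym.
case: (boolP (ev && (b == uu))) => [/andP [e /eqP eb]|h2] //.
have au := pt_lt' av h1; have bu := pt_lt' bv h2.
have ds := dd_sum au bu ab. have := dd_lt au bu.
case: ifP => h; case: ifP => h' //; lia.
Qed.

Lemma inw_noev_or d : 0 < d <= MM -> ~~ inw d -> v + kk d < wopt'.
Proof.
have := hv; rewrite /inw /kk /MM /ss /ev /uu /wopt'.
case: (boolP (odd v)) => ho /=.
  have [m hm] : exists m, v = m.*2.+1 by exists v./2; rewrite -[v in LHS]odd_double_half ho add1n.
  rewrite hm; sif; move=> *; lia.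
have [m hm] : exists m, v = m.*2 by exists v./2; rewrite -[v in LHS]odd_double_half (negbTE ho) add0n.
rewrite hm; sif; move=> *; lia.
Qed.

Lemma FF_range a b : a < v -> b < v -> a != b -> FF a b < wopt'.
Proof.
move=> av bv ab.
have W : v <= wopt' by rewrite /wopt'; lia.
case: (ltnP (FF a b) v) => h; first by lia.
have [_ _ [d [d1 d2 -> _]]] := Lout av bv ab h.
exact: inw_noev_or.
Qed.

Lemma Lin_dd x y : x < v -> y < v -> x != y -> FF x y < v -> x < uu ->
  0 < dd x (FF x y) <= MM.
Proof.
move=> xv yv xy h xu.
have [U1 [U2 U3]] := uuE. have M1' := M1. have [s1 [s2 [s3 s4]]] := ss_facts.
have [cu [[_ [ex _]]|[_ [[_ [_ ->]]|[[d [d1 d2 _ ->]]|[d [d1 d2 _ _ ->]]]]]]] := Lin xv yv xy h.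
- lia.
- lia.
- have := ee_facts d2; lia.
- have := ee_facts d2; lia.
Qed.

Lemma FF_ne a b : a < v -> b < v -> a != b -> (FF a b != a) && (FF a b != b).
Proof.
move=> av bv ab.
case: (ltnP (FF a b) v) => h; last by apply/andP; split; apply/eqP; lia.
have [cu _] := Lin av bv ab h.
have ne : forall x y, x < v -> y < v -> x != y -> FF x y < v -> FF x y != x.
  move=> x y xv yv xy hx.
  have [cu' _] := Lin xv yv xy hx.
  case: (boolP (x == uu)) => [/eqP xe|xn].
    apply/eqP => E; lia.
  have xu := pt_lt xv xn.
  have := Lin_dd xv yv xy hx xu.
  apply: contraTN => /eqP e; rewrite e.
  have := dd0 xu xu; rewrite eqxx; lia.
apply/andP; split; first exact: ne.
have h' : FF b a < v by rewrite -FF_sym.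
rewrite FF_sym //; apply: ne => //; rewrite eq_sym //.
Qed.

Lemma kk_inj d1 d2 : 0 < d1 <= MM -> 0 < d2 <= MM -> ~~ inw d1 -> ~~ inw d2 ->
  kk d1 = kk d2 -> d1 = d2.
Proof.
have := hv; rewrite /inw /kk /MM /ss /ev /uu.
case: (boolP (odd v)) => ho /=.
  have [m hm] : exists m, v = m.*2.+1 by exists v./2; rewrite -[v in LHS]odd_double_half ho add1n.
  rewrite hm; sif; move=> *; lia.
have [m hm] : exists m, v = m.*2 by exists v./2; rewrite -[v in LHS]odd_double_half (negbTE ho) add0n.
rewrite hm; sif; move=> *; lia.
Qed.

Lemma BD_contra d : ev -> inw d -> 0 < d <= MM -> ee d - d = ss -> False.
Proof. move=> e; rewrite /inw e /ee /ss /=; move=> *; lia. Qed.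

Lemma P1a x y y' : x < v -> y < v -> y' < v -> x != y -> x != y' ->
  FF x y = FF x y' -> FF x y < v -> y = y'.
Proof.
move=> xv yv y'v xy xy' E h.
have h' : FF x y' < v by rewrite -E.
have [U1 [U2 U3]] := uuE. have M1' := M1. have [s1 [s2 [s3 s4]]] := ss_facts.
have MU := MM_lt.
have [cu L1] := Lin xv yv xy h.
have [_ L2] := Lin xv y'v xy' h'.
rewrite -E in L2.
case: L1 => [[e1 [ex [yu c1]]]|[xu H1]].
  case: L2 => [[_ [_ [y'u c2]]]|[xu' _]]; last by lia.
  apply: (@addu_inj _ _ ss) => //; first by lia.
  by rewrite -c1 -c2.
case: L2 => [[_ [ex _]]|[_ H2]]; first by lia.
case: H1 => [[e1 [ey d1]]|[[d [d1 d2 ey dl]]|[d [d1 d2 yu ex dl]]]];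
case: H2 => [[e2 [ey' d1']]|[[d' [d1' d2' ey' dl']]|[d' [d1' d2' yu' ex' dl']]]].
all: try (by rewrite ey ey').
all: try (by have := ee_facts d2; have := ee_facts d2'; lia).
all: try (by have := ee_facts d2'; lia).
all: try (by have := ee_facts d2; lia).
all: try (by case: (BD_contra e1 d2' d1'); lia).
all: try (by case: (BD_contra e2 d2 d1); lia).
- have dd' : d = d' by have := ee_facts d2; have := ee_facts d2'; lia.
  by rewrite ey ey' dd'.
- have dd' : d = d' by have := ee_facts d2; have := ee_facts d2'; lia.
  apply: (@addu_inj _ _ d) => //; first by lia.
  by rewrite -ex dd' -ex'.
Qed.

Lemma P1b x y c y' : x < v -> y < v -> c < v -> y' < v -> x != y -> c != y' ->
  FF x y = c -> FF c y' = x -> False.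
Proof.
move=> xv yv cv y'v xy cy' E1 E2.
have [U1 [U2 U3]] := uuE.
have h1 : FF x y < v by rewrite E1.
have h2 : FF c y' < v by rewrite E2.
have [cu _] := Lin xv yv xy h1.
have [xu _] := Lin cv y'v cy' h2.
rewrite E1 in cu; rewrite E2 in xu.
have D1 := Lin_dd xv yv xy h1 xu.
have D2 := Lin_dd cv y'v cy' h2 cu.
rewrite E1 in D1; rewrite E2 in D2.
have xc : x != c by have := FF_ne xv yv xy; rewrite E1 eq_sym => /andP [].
have := dd_sum xu cu xc; lia.
Qed.

Lemma P2 x y1 y2 y3 z : x < v -> y1 < v -> y2 < v -> y3 < v ->
  x != y1 -> x != y2 -> x != y3 -> v <= z ->
  FF x y1 = z -> FF x y2 = z -> FF x y3 = z -> [\/ y1 = y2, y1 = y3 | y2 = y3].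
Proof.
move=> xv v1 v2 v3 n1 n2 n3 vz E1 E2 E3.
have [xu y1u [d1 [r1 i1 k1 o1]]] := Lout xv v1 n1 (ltac:(by rewrite E1)).
have [_ y2u [d2 [r2 i2 k2 o2]]] := Lout xv v2 n2 (ltac:(by rewrite E2)).
have [_ y3u [d3 [r3 i3 k3 o3]]] := Lout xv v3 n3 (ltac:(by rewrite E3)).
have MU := MM_lt.
have e12 : d1 = d2 by apply: kk_inj => //; lia.
have e13 : d1 = d3 by apply: kk_inj => //; lia.
subst d2 d3.
have inj : forall a b, a < uu -> b < uu -> x = addu a d1 -> x = addu b d1 -> a = b.
  move=> a b au bu ea eb; apply: (@addu_inj _ _ d1) => //; first by lia.
  by rewrite -ea -eb.
case: o1 => o1; case: o2 => o2; case: o3 => o3.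
all: try (by constructor 1; rewrite o1 o2).
all: try (by constructor 2; rewrite o1 o3).
all: try (by constructor 3; rewrite o2 o3).
all: try (by constructor 1; apply: inj).
all: try (by constructor 2; apply: inj).
all: try (by constructor 3; apply: inj).
Qed.
End N.


Lemma card3 (T : finType) (S : {set T}) :
  (forall A1 A2 A3, A1 \in S -> A2 \in S -> A3 \in S -> [\/ A1 = A2, A1 = A3 | A2 = A3]) ->
  #|S| <= 2.
Proof.
move=> H; rewrite leqNgt; apply/negP => h.
have : 2 < size (enum S) by rewrite -cardE.
have u := enum_uniq (mem S).
have mS x : x \in enum S -> x \in S by rewrite mem_enum.
case e: (enum S) u mS => [|a [|b [|c r]]] //= u mS _.
have ha : a \in S by apply: mS; rewrite !inE eqxx.
have hb : b \in S by apply: mS; rewrite !inE eqxx ?orbT.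
have hc : c \in S by apply: mS; rewrite !inE eqxx ?orbT.
move: u; case: (H a b c ha hb hc) => ->; by rewrite !inE eqxx ?orbT //= ?andbF.
Qed.

Section Cons.
Variable v : nat.
Hypothesis hv : 3 <= v.
Let n := wopt v.
Variable y0 : 'I_n.

Definition phi0 (A : {set 'I_v}) : 'I_n :=
  match enum A with [:: a; b] => insubd y0 (FF v a b) | _ => y0 end.

Lemma blockP A : is_block A ->
  exists a b : 'I_v, [/\ a != b, A = [set a; b] & val (phi0 A) = FF v a b].
Proof.
rewrite /is_block => /eqP c2.
have : size (enum A) = 2 by rewrite -cardE.
have u := enum_uniq (mem A).
have mA x : (x \in enum A) = (x \in A) by rewrite mem_enum.
rewrite /phi0; case e: (enum A) u mA => [|a [|b [|]]] //= u mA _.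
exists a, b; split.
- by move: u; rewrite !inE andbT.
- by apply/setP => x; rewrite -mA !inE.
- rewrite val_insubd FF_range //.
  by move: u; rewrite !inE andbT.
Qed.

Lemma extE A (a b : 'I_v) (p : 'I_n) : A = [set a; b] ->
  (p \in ext_block phi0 A) = ((val a == val p) || (val b == val p)) || (val p == val (phi0 A)).
Proof.
move=> eA; rewrite /ext_block inE; congr (_ || _).
  rewrite eA; apply/existsP/orP => [[x /andP [hx e]]|[e|e]].
  - by move: hx; rewrite !inE => /orP [] /eqP <-; [left|right].
  - by exists a; rewrite !inE eqxx.
  - by exists b; rewrite !inE eqxx orbT.
Qed.


Definition SS (p q : 'I_n) :=
  [set A : {set 'I_v} | is_block A && (p \in ext_block phi0 A) && (q \in ext_block phi0 A)].

Lemma SSsym p q : SS p q = SS q p.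
Proof. by apply/setP => A; rewrite !inE -!andbA; congr (_ && _); rewrite andbC. Qed.

Lemma mem_SS (p q : 'I_n) A : A \in SS p q -> exists a b : 'I_v, [/\ val a != val b, A = [set a; b],
   ((val a == val p) || (val b == val p)) || (val p == FF v a b) &
   ((val a == val q) || (val b == val q)) || (val q == FF v a b)].
Proof.
rewrite inE => /andP [/andP [bA mp] mq].
have [a [b [ab eA ph]]] := blockP bA.
rewrite (extE _ eA) ph in mp; rewrite (extE _ eA) ph in mq.
by exists a, b; split.
Qed.

Lemma classI (p q : 'I_n) (hp : val p < v) (hq : val q < v) (pq : p != q) A : A \in SS p q ->
  A = [set Ordinal hp; Ordinal hq] \/
  (exists y : 'I_v, [/\ val y != val p, A = [set Ordinal hp; y] & FF v (val p) (val y) = val q]) \/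
  (exists y : 'I_v, [/\ val y != val q, A = [set Ordinal hq; y] & FF v (val q) (val y) = val p]).
Proof.
move=> /mem_SS [a [b [ab eA mp mq]]].
have pq' : val p != val q by [].
have av : val a < v := ltn_ord a; have bv : val b < v := ltn_ord b.
have sym := FF_sym hv av bv ab.
case/orP: mp => [/orP [/eqP ap|/eqP bp]|/eqP pF]; case/orP: mq => [/orP [/eqP aq|/eqP bq]|/eqP qF].
- by exfalso; move: pq'; rewrite -ap -aq eqxx.
- by left; rewrite eA; congr [set _; _]; apply: val_inj.
- right; left; exists b; split.
  + by rewrite -ap eq_sym.
  + by rewrite eA; congr [set _; _]; apply: val_inj.
  + by rewrite -ap qF.
- by left; rewrite eA setUC; congr [set _; _]; apply: val_inj.
- by exfalso; move: pq'; rewrite -bp -bq eqxx.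
- right; left; exists a; split.
  + by rewrite -bp.
  + by rewrite eA setUC; congr [set _; _]; apply: val_inj.
  + by rewrite -bp -sym qF.
- right; right; exists b; split.
  + by rewrite -aq eq_sym.
  + by rewrite eA; congr [set _; _]; apply: val_inj.
  + by rewrite -aq pF.
- right; right; exists a; split.
  + by rewrite -bq.
  + by rewrite eA setUC; congr [set _; _]; apply: val_inj.
  + by rewrite -bq -sym pF.
- by exfalso; move: pq'; rewrite pF qF eqxx.
Qed.

Lemma caseI (p q : 'I_n) (hp : val p < v) (hq : val q < v) (pq : p != q) : #|SS p q| <= 2.
Proof.
set B0 := [set Ordinal hp; Ordinal hq].
have pq' : val p != val q by [].
have pw : forall A A', A \in SS p q -> A' \in SS p q -> A != B0 -> A' != B0 -> A = A'.
  move=> A A' hA hA' n1 n2.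
  case: (classI hp hq pq hA) => [e|[[y [y1 y2 y3]]|[y [y1 y2 y3]]]]; first by rewrite e eqxx in n1.
  - case: (classI hp hq pq hA') => [e|[[z [z1 z2 z3]]|[z [z1 z2 z3]]]]; first by rewrite e eqxx in n2.
    + rewrite y2 z2; congr [set _; _]; apply: val_inj.
      apply: (P1a hv hp (ltn_ord y) (ltn_ord z)); rewrite 1?eq_sym //.
      * by rewrite y3 z3.
      * by rewrite y3.
    + exfalso; apply: (P1b hv hp (ltn_ord y) hq (ltn_ord z) _ _ y3 z3); rewrite eq_sym //.
  - case: (classI hp hq pq hA') => [e|[[z [z1 z2 z3]]|[z [z1 z2 z3]]]]; first by rewrite e eqxx in n2.
    + exfalso; apply: (P1b hv hq (ltn_ord y) hp (ltn_ord z) _ _ y3 z3); rewrite eq_sym //.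
    + rewrite y2 z2; congr [set _; _]; apply: val_inj.
      apply: (P1a hv hq (ltn_ord y) (ltn_ord z)); rewrite 1?eq_sym //.
      * by rewrite y3 z3.
      * by rewrite y3.
apply: card3 => A1 A2 A3 h1 h2 h3.
case: (eqVneq A1 B0) => e1; case: (eqVneq A2 B0) => e2; case: (eqVneq A3 B0) => e3.
all: try (by constructor 1; rewrite e1 e2).
all: try (by constructor 2; rewrite e1 e3).
all: try (by constructor 3; rewrite e2 e3).
all: try (by constructor 1; apply: pw).
all: try (by constructor 2; apply: pw).
all: try (by constructor 3; apply: pw).
Qed.

Lemma caseII (p q : 'I_n) (hp : val p < v) (hq : v <= val q) : #|SS p q| <= 2.
Proof.
have cl : forall A, A \in SS p q ->
   exists y : 'I_v, [/\ val y != val p, A = [set Ordinal hp; y] & FF v (val p) (val y) = val q].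
  move=> A /mem_SS [a [b [ab eA mp mq]]].
  have av : val a < v := ltn_ord a; have bv : val b < v := ltn_ord b.
  have sym := FF_sym hv av bv ab.
  case/orP: mq => [/orP [/eqP aq|/eqP bq]|/eqP qF]; try lia.
  case/orP: mp => [/orP [/eqP ap|/eqP bp]|/eqP pF]; try lia.
  - exists b; split.
    + by rewrite -ap eq_sym.
    + by rewrite eA; congr [set _; _]; apply: val_inj.
    + by rewrite -ap qF.
  - exists a; split.
    + by rewrite -bp.
    + by rewrite eA setUC; congr [set _; _]; apply: val_inj.
    + by rewrite -bp -sym qF.
apply: card3 => A1 A2 A3 h1 h2 h3.
have [y1 [a1 b1 c1]] := cl _ h1.
have [y2 [a2 b2 c2]] := cl _ h2.
have [y3 [a3 b3 c3]] := cl _ h3.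
have := P2 hv hp (ltn_ord y1) (ltn_ord y2) (ltn_ord y3); rewrite !(eq_sym (val p)).
move=> /(_ _ a1 a2 a3 hq c1 c2 c3) [] /val_inj e.
- by constructor 1; rewrite b1 b2 e.
- by constructor 2; rewrite b1 b3 e.
- by constructor 3; rewrite b2 b3 e.
Qed.

Lemma caseIV (p q : 'I_n) (hp : v <= val p) (hq : v <= val q) (pq : p != q) : #|SS p q| <= 2.
Proof.
apply: card3 => A A2 A3 hA _ _; exfalso.
have [a [b [ab eA mp mq]]] := mem_SS hA.
have av : val a < v := ltn_ord a; have bv : val b < v := ltn_ord b.
have pq' : val p != val q by [].
case/orP: mq => [/orP [/eqP aq|/eqP bq]|/eqP qF]; try lia.
Qed.

Lemma nestC (p q : 'I_n) : p != q -> #|SS p q| <= 2.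
Proof.
move=> pq.
case: (ltnP (val p) v) => hp; case: (ltnP (val q) v) => hq.
- exact: caseI.
- exact: caseII.
- rewrite SSsym; exact: caseII.
- exact: caseIV.
Qed.

End Cons.


Lemma card_sumb (T : finType) (A : {set T}) : #|A| = \sum_(x : T) (x \in A).
Proof. by rewrite -sum1_card big_mkcond; apply: eq_bigr => x _; case: (x \in A). Qed.

Lemma sum_bool_card (T : finType) (P : {set T}) (f : T -> bool) :
  \sum_(A in P) f A = #|[set A in P | f A]|.
Proof.
rewrite -sum1_card big_mkcond [RHS]big_mkcond; apply: eq_bigr => A _.
by rewrite inE; case: (A \in P); case: (f A).
Qed.

Lemma sum_ge (n v : nat) : \sum_(y < n) (v <= y) = n - v.
Proof.
rewrite -(big_mkord xpredT (fun i => nat_of_bool (v <= i))).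
case: (leqP v n) => h.
  rewrite (@big_cat_nat _ _ _ v) //= big1_seq ?add0n.
    rewrite (eq_big_nat _ _ (F2 := fun _ => 1)); first by rewrite sum_nat_const_nat muln1.
    by move=> i /andP [-> _].
  move=> i /andP [_]; rewrite mem_iota add0n => /andP [_ hi]; apply/eqP; rewrite eqb0; lia.
rewrite big1_seq //; first by lia.
move=> i /andP [_]; rewrite mem_iota add0n => /andP [_ hi]; apply/eqP; rewrite eqb0; lia.
Qed.

Section Lower.
Variables (v n : nat) (phi : {set 'I_v} -> 'I_n).
Hypothesis hv : 2 <= v.
Hypothesis W : weak_nesting phi.

Let vn : v <= n := proj1 W.
Let notin : forall A : {set 'I_v}, is_block A -> forall x, x \in A -> val (phi A) != val x :=
  proj1 (proj2 W).
Let nest : forall p q : 'I_n, p != q ->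
     #|[set A : {set 'I_v} | is_block A && (p \in ext_block phi A)
                                        && (q \in ext_block phi A)]| <= 2 :=
  proj2 (proj2 W).

Definition wid (x : 'I_v) : 'I_n := widen_ord vn x.

Lemma ext_wid (A : {set 'I_v}) (x : 'I_v) : x \in A -> wid x \in ext_block phi A.
Proof. by move=> hx; rewrite inE; apply/orP; left; apply/existsP; exists x; rewrite hx /=. Qed.

Lemma ext_phi (A : {set 'I_v}) : phi A \in ext_block phi A.
Proof. by rewrite inE eqxx orbT. Qed.

Definition Blk := [set A : {set 'I_v} | #|A| == 2].
Definition INs := [set A in Blk | val (phi A) < v].
Definition OUTs := [set A in Blk | ~~ (val (phi A) < v)].

Lemma card_blk : #|INs| + #|OUTs| = 'C(v, 2).
Proof.
rewrite -[v in 'C(v, _)]card_ord -card_draws -/Blk -(cardsID [set A | val (phi A) < v] Blk).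
congr (_ + _); apply: eq_card => A; by rewrite !inE // andbC.
Qed.

Lemma sumA2 (P : {set {set 'I_v}}) : P \subset Blk ->
  \sum_(A in P) \sum_(x : 'I_v) (x \in A) = 2 * #|P|.
Proof.
move=> sP; rewrite mulnC -sum_nat_const; apply: eq_bigr => A hA.
by rewrite -card_sumb; apply/eqP; move/subsetP: sP => /(_ A hA); rewrite inE.
Qed.

Lemma out_bound : #|OUTs| <= v * (n - v).
Proof.
rewrite -(@leq_pmul2l 2) //.
rewrite -sumA2; last by apply/subsetP => A; rewrite inE => /andP [].
rewrite exchange_big /=.
apply: (@leq_trans (\sum_(x < v) (2 * (n - v)))); last first.
  by rewrite sum_nat_const card_ord mulnCA.
apply: leq_sum => x _.
have -> : \sum_(A in OUTs) (x \in A) = \sum_(A in OUTs) \sum_(y : 'I_n) ((x \in A) && (phi A == y)).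
  apply: eq_bigr => A _; rewrite (bigD1 (phi A)) //= eqxx andbT big1 ?addn0 //.
  by move=> y /negbTE; rewrite eq_sym => ->; rewrite andbF.
rewrite exchange_big /= -sum_ge big_distrr /=; apply: leq_sum => y _.
rewrite sum_bool_card.
case: (leqP v y) => hy.
  apply: leq_trans (nest (p := wid x) (q := y) _).
    apply: subset_leq_card; apply/subsetP => A; rewrite !inE => /andP [/andP [hA _] /andP [hx /eqP ey]].
    rewrite /is_block hA /=; apply/andP; split; last by rewrite ey eqxx orbT.
    by apply/orP; left; apply/existsP; exists x; rewrite hx /=.
  apply/negP => /eqP e; move: hy; rewrite -e leqNgt => /negP; apply; exact: (ltn_ord x).
rewrite muln0 leqn0 cards_eq0; apply/eqP/setP => A; rewrite !inE.
apply/negP => /andP [/andP [_ hA] /andP [_ /eqP ey]]; move: hA; rewrite ey hy.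
by [].
Qed.


Definition NN (x c : 'I_v) := \sum_(A in INs) ((x \in A) && (val (phi A) == val c)).

Lemma blk_in A : A \in INs -> is_block A.
Proof. by rewrite !inE => /andP []. Qed.

Lemma pair_bound x c : NN x c + NN c x <= (x != c).
Proof.
rewrite /NN -big_split /=.
case: eqVneq => [<-|xc].
  rewrite leqn0 sum_nat_eq0; apply/forall_inP => A hA.
  have bA := blk_in hA.
  by case hx: (x \in A) => //=; rewrite (negbTE (notin bA hx)).
rewrite (eq_bigr (fun A : {set 'I_v} => nat_of_bool (((x \in A) && (val (phi A) == val c)) ||
                                       ((c \in A) && (val (phi A) == val x))))); last first.
  move=> A hA; have bA := blk_in hA.
  have n1 := @notin A bA c.
  case h2: (c \in A); case e1: (val (phi A) == val c) => //=.
  - by move: (n1 h2); rewrite e1.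
  - by rewrite ?andbF ?andbT ?addn0 ?orbF //=; case: (x \in A).
  - by rewrite ?andbF ?andbT ?addn0 ?orbF //=; case: (x \in A).
  - by rewrite ?andbF ?andbT ?addn0 ?orbF //=; case: (x \in A).
rewrite sum_bool_card.
set S := [set A : {set 'I_v} | is_block A && (wid x \in ext_block phi A)
                                        && (wid c \in ext_block phi A)].
set B0 := [set x; c].
have hS : #|S| <= 2 by apply: nest; apply/negP => /eqP /(congr1 val) /= /val_inj; apply/eqP.
have hB0 : B0 \in S.
  by rewrite inE /is_block cards2 xc /= !ext_wid // !inE eqxx ?orbT.
rewrite (cardsD1 B0 S) hB0 add1n ltnS in hS.
apply: leq_trans hS; apply: subset_leq_card; apply/subsetP => A.
rewrite inE => /andP [hA /orP [/andP [hx /eqP e]|/andP [hc /eqP e]]]; have bA := blk_in hA.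
- have pc : phi A = wid c by apply: val_inj; rewrite e.
  rewrite in_setD1 [A \in S]inE bA ext_wid //= -pc ext_phi andbT.
  apply/negP => /eqP eA; move: (@notin A bA c); rewrite e eqxx eA !inE eqxx orbT.
  by move/(_ isT).
- have px : phi A = wid x by apply: val_inj; rewrite e.
  rewrite in_setD1 [A \in S]inE bA (ext_wid hc) -px ext_phi /= andbT.
  apply/negP => /eqP eA; move: (@notin A bA x); rewrite e eqxx eA !inE eqxx.
  by move/(_ isT).
Qed.


Lemma in_bound : 4 * #|INs| <= v * v.-1.
Proof.
have E : 2 * #|INs| = \sum_(x < v) \sum_(c < v) NN x c.
  rewrite -sumA2; last by apply/subsetP => A; rewrite inE => /andP [].
  rewrite exchange_big /=; apply: eq_bigr => x _.
  rewrite /NN exchange_big /=; apply: eq_bigr => A hA.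
  have h : val (phi A) < v by move: hA; rewrite inE => /andP [].
  rewrite (bigD1 (Ordinal h)) //= eqxx andbT big1 ?addn0 // => c hc.
  apply/eqP; rewrite eqb0 negb_and; apply/orP; right.
  by apply: contra hc => /eqP e; apply/eqP/val_inj; rewrite /= e.
have -> : 4 * #|INs| = 2 * #|INs| + 2 * #|INs| by lia.
rewrite {1}E E [X in _ + X]exchange_big /= -big_split /=.
apply: (@leq_trans (\sum_(x < v) \sum_(c < v) (x != c))).
  by apply: leq_sum => x _; rewrite -big_split; apply: leq_sum => c _; apply: pair_bound.
rewrite -[v in v * _]card_ord -sum_nat_const leq_eqVlt; apply/orP; left; apply/eqP.
apply: eq_bigr => x _.
rewrite -[v in v.-1]card_ord -(cardsC1 x) card_sumb; apply: eq_bigr => c _.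
by rewrite !inE eq_sym.
Qed.

Lemma bin2_dbl m : 2 * 'C(m, 2) = m * m.-1.
Proof.
elim: m => // m IH; rewrite binS bin1 mulnDr IH; case: m {IH} => //= m; lia.
Qed.

Lemma lower : wopt v <= n.
Proof.
have h1 := card_blk. have h2 := out_bound. have h3 := in_bound. have h4 := bin2_dbl v.
have h5 : v * v.-1 <= 4 * (v * (n - v)) by lia.
rewrite mulnCA leq_pmul2l in h5; last by lia.
rewrite /wopt; lia.
Qed.

End Lower.

Unset Implicit Arguments.

Theorem theorem2p1 (v : nat) (hv : 2 <= v) :
  (exists phi : {set 'I_v} -> 'I_(wopt v), weak_nesting phi) /\
  (forall (n : nat) (phi : {set 'I_v} -> 'I_n), weak_nesting phi -> wopt v <= n).
Proof.
split; last by move=> n phi W; exact: (lower hv W).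
have n0 : 0 < wopt v by rewrite /wopt; lia.
have vw : v <= wopt v by rewrite /wopt; lia.
case: (leqP v 2) => v2.
  have e2 : v = 2 by lia.
  subst v.
  have h2 : 2 < wopt 2 by [].
  exists (fun _ => Ordinal h2); split => //; split.
    by move=> A _ x _; rewrite /=; have := ltn_ord x; lia.
  move=> p q _.
  apply: (@leq_trans #|[set A : {set 'I_2} | #|A| == 2]|).
    by apply: subset_leq_card; apply/subsetP => A; rewrite !inE => /andP [/andP [hb _] _].
  by rewrite card_draws card_ord.
pose y0 := Ordinal n0.
exists (phi0 y0); split => //; split.
  move=> A bA x hx.
  have [a [b [ab eA e]]] := blockP v2 y0 bA.
  rewrite e; rewrite eA !inE in hx.
  have := FF_ne v2 (ltn_ord a) (ltn_ord b) ab.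
  by case/orP: hx => /eqP -> /andP [].
by move=> p q pq; apply: (nestC v2 y0 pq).
Qed.
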